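(* Suppose $2\le m\le n$. If $P_1,\dots,P_\ell$ are deterministic perfect channels from $\{1,\dots,m\}$ to $\{1,\dots,n\}$ such that at least one column of $P_1+\cdots+P_\ell$ has more than one nonzero entry, then $\{P_1,\dots,P_\ell\}$ is not $\mathcal{I}$-minimized.
   Context: Channels from $\{1,\dots,m\}$ to $\{1,\dots,n\}$ are $m\times n$ row-stochastic matrices; $\mathcal{D}$ is the set of deterministic (0-1) channels, $\mathrm{rank}(D)$ the matrix rank. A deterministic perfect channel is a deterministic channel of rank $\min(m,n)$. For a channel $W$, $\Lambda(W)=\{\lambda\text{ probability distribution on }\mathcal{D}: W=\sum_D\lambda_DD\}$, $C_{11}(\lambda)=\sum_D\lambda_D\log_2\mathrm{rank}(D)$, $\underline{C}_{11}(W)=\inf_{\lambda\in\Lambda(W)}C_{11}(\lambda)$. A subset $S\subseteq\mathcal{D}$ is $\mathcal{I}$-minimized if there is a probability distribution $\lambda$ on $\mathcal{D}$ with $\mathrm{supp}(\lambda)=S$ and $C_{11}(\lambda)=\underline{C}_{11}(W)$ where $W=\sum_D\lambda_DD$. *)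

(* Defs.v *)
From HB Require Import structures.
From mathcomp Require Import all_boot all_order all_algebra.
From mathcomp Require Import classical_sets reals exp.
Set Implicit Arguments. Unset Strict Implicit. Unset Printing Implicit Defensive.
Import Order.TTheory GRing.Theory Num.Theory.
Local Open Scope ring_scope.

(* A deterministic channel from {1..m} to {1..n} is a 0-1 row-stochastic
   m x n matrix; these are in bijection with maps 'I_m -> 'I_n. *)
Definition detfun (m n : nat) := {ffun 'I_m -> 'I_n}.

Definition detmx {R : realType} {m n : nat} (f : detfun m n) : 'M[R]_(m, n) :=
  \matrix_(i < m, j < n) (if f i == j then 1 else 0).

Definition perfect {R : realType} {m n : nat} (f : detfun m n) : bool :=
  \rank (@detmx R m n f) == minn m n.

Definition is_distr {R : realType} {m n : nat} (lam : {ffun detfun m n -> R}) : Prop :=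
  (forall D, 0 <= lam D) /\ \sum_(D : detfun m n) lam D = 1.

Definition supp {R : realType} {m n : nat} (lam : {ffun detfun m n -> R})
  : {set detfun m n} := [set D | lam D != 0].

Definition mix {R : realType} {m n : nat} (lam : {ffun detfun m n -> R}) : 'M[R]_(m, n) :=
  \sum_(D : detfun m n) lam D *: detmx D.

Definition log2 {R : realType} (x : R) : R := ln x / ln 2.

Definition C11 {R : realType} {m n : nat} (lam : {ffun detfun m n -> R}) : R :=
  \sum_(D : detfun m n) lam D * log2 ((\rank (@detmx R m n D))%:R).

Definition Lambda {R : realType} {m n : nat} (W : 'M[R]_(m, n))
  : set {ffun detfun m n -> R} :=
  [set lam | is_distr lam /\ mix lam = W].

Definition lowC11 {R : realType} {m n : nat} (W : 'M[R]_(m, n)) : R :=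
  inf [set C11 lam | lam in Lambda W].

Definition I_minimized {R : realType} {m n : nat} (S : {set detfun m n}) : Prop :=
  exists lam : {ffun detfun m n -> R},
    is_distr lam /\ supp lam = S /\ C11 lam = lowC11 (mix lam).

(* Main.v *)
Require Import Defs.
From HB Require Import structures.
From mathcomp Require Import all_boot all_order all_algebra.
From mathcomp Require Import classical_sets reals exp.
From mathcomp Require Import lra zify.
Import Order.TTheory GRing.Theory Num.Theory.
Local Open Scope ring_scope.

Section Aux.
Variable R : realType.

Lemma log2_le (r m : nat) : (1 <= m)%N -> (r <= m)%N -> @log2 R r%:R <= log2 m%:R.
Proof.
move=> m1 rm; rewrite /log2 ler_pM2r ?invr_gt0 ?ln_gt0 ?ltr1n //.
case: r rm => [|r] rm; first by rewrite ln0 // ln_ge0 // ler1n.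
by rewrite ler_ln ?posrE ?ltr0n // ler_nat.
Qed.

Lemma log2_lt (r m : nat) : (2 <= m)%N -> (r < m)%N -> @log2 R r%:R < log2 m%:R.
Proof.
move=> m1 rm; rewrite /log2 ltr_pM2r ?invr_gt0 ?ln_gt0 ?ltr1n //.
case: r rm => [|r] rm; first by rewrite ln0 // ln_gt0 // ltr1n.
rewrite ltr_ln ?posrE ?ltr0n // ?ltr_nat //; by apply: leq_trans m1.
Qed.

Lemma log2_ge0 (r : nat) : 0 <= @log2 R r%:R.
Proof.
rewrite /log2 divr_ge0 //; last by rewrite ln_ge0 // ler1n.
case: r => [|r]; first by rewrite ln0.
by rewrite ln_ge0 // ler1n.
Qed.

Lemma rank_lt (m n : nat) (f : detfun m n) (a b : 'I_m) :
  a != b -> f a = f b -> (\rank (@detmx R m n f) < m)%N.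
Proof.
move=> ab fab.
set A := detmx f.
set u : 'rV[R]_m := delta_mx 0 a - delta_mx 0 b.
have uA : u *m A = 0.
  rewrite /u mulmxBl -!rowE; apply/eqP; rewrite subr_eq0; apply/eqP.
  by apply/rowP => k; rewrite !mxE fab.
have un : u != 0.
  apply/negP => /eqP /matrixP /(_ 0 a); rewrite !mxE !eqxx (negbTE ab) /= => /eqP.
  by rewrite subr0 oner_eq0.
have : (u <= kermx A)%MS by rewrite sub_kermx uA.
move/mxrankS; rewrite mxrank_ker.
have : (\rank u != 0)%N by rewrite mxrank_eq0.
case: (\rank u) => // k _ H.
have := rank_leq_row A; lia.
Qed.

Lemma sum_delta (T : finType) (Q : T) (F : T -> R) :
  \sum_(D : T) (D == Q)%:R * F D = F Q.
Proof.
rewrite (bigD1 Q) //= eqxx mul1r big1 ?addr0 // => D /negPf ->.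
by rewrite mul0r.
Qed.

End Aux.
Arguments rank_lt {R m n f a b}.

Theorem proposition4 (R : realType) (m n : nat) (Ps : seq (detfun m n)) :
  (2 <= m)%N -> (m <= n)%N ->
  (forall P, P \in Ps -> @perfect R m n P) ->
  (exists j : 'I_n,
      (1 < #|[set i : 'I_m | (\sum_(P <- Ps) @detmx R m n P)%R i j != 0%R]|)%N) ->
  ~ @I_minimized R m n [set P in Ps].
Proof.
move=> m2 mn perf [j /card_gt1P [i1 [i2 [+ + i12]]]].
have ex : forall i, i \in [set i : 'I_m | (\sum_(P <- Ps) @detmx R m n P)%R i j != 0%R] ->
   exists2 P, P \in Ps & P i = j.
  move=> i; rewrite inE summxE => H.
  suff /hasP [P PP /eqP e] : has (fun P : detfun m n => P i == j) Ps by exists P.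
  apply/negPn/negP => /hasPn Hn.
  move: H; rewrite big1_seq ?eqxx // => P /andP [_ PP]; rewrite mxE.
  by rewrite (negbTE (Hn P PP)).
move=> /ex [P PPs Pi1] /ex [P' P'Ps P'i2].
have rankm : forall D, D \in Ps -> \rank (@detmx R m n D) = m.
  by move=> D /perf /eqP ->; apply/minn_idPl.
have PP' : P != P'.
  apply/eqP => e; rewrite -e in P'i2.
  have := rank_lt (R:=R) i12 (etrans Pi1 (esym P'i2)).
  by rewrite rankm // ltnn.
set Q : detfun m n := [ffun i => if i == i2 then j else P i].
set Q' : detfun m n := [ffun i => if i == i2 then P i2 else P' i].
have rQ : (\rank (@detmx R m n Q) < m)%N.
  apply: (rank_lt (R:=R) i12); rewrite !ffunE eqxx (negbTE i12) //.
have rQ' : (\rank (@detmx R m n Q') <= m)%N by apply: rank_leq_row.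
have Hmx : forall i k, @detmx R m n Q i k + detmx Q' i k = detmx P i k + detmx P' i k.
  move=> i k; rewrite !mxE !ffunE; case: (eqVneq i i2) => [->|_] //; rewrite P'i2 addrC //.
move=> [lam [[lam0 lam1] [suppl Cl]]].
have lpos : forall D, D \in Ps -> 0 < lam D.
  move=> D DPs; have : D \in supp lam by rewrite suppl inE.
  rewrite inE => h.
  by rewrite lt_def h lam0.
set eps := Num.min (lam P) (lam P').
have eps0 : 0 < eps by rewrite lt_min !lpos.
set c := fun D : detfun m n =>
  (D == Q)%:R + (D == Q')%:R - (D == P)%:R - (D == P')%:R : R.
set lam' := [ffun D => lam D + eps * c D].
have lin : forall G : detfun m n -> R,
  \sum_D lam' D * G D = \sum_D lam D * G D + eps * (G Q + G Q' - G P - G P').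
  move=> G; under eq_bigr => D _ do rewrite ffunE mulrDl -mulrA.
  rewrite big_split /= -mulr_sumr; congr (_ + eps * _).
  rewrite /c; under eq_bigr => D _ do rewrite !mulrBl mulrDl.
  by rewrite !sumrB big_split /= !sum_delta.
have lam'0 : forall D, 0 <= lam' D.
  move=> D; rewrite ffunE /c.
  have h1 : eps <= lam P by rewrite ge_min lexx.
  have h2 : eps <= lam P' by rewrite ge_min lexx orbT.
  have q1 : 0 <= (D == Q)%:R :> R by [].
  have q2 : 0 <= (D == Q')%:R :> R by [].
  have key : eps * ((D == P)%:R + (D == P')%:R) <= lam D.
    case: (eqVneq D P) => [->|nP].
      by rewrite (negbTE PP') addr0 mulr1.
    case: (eqVneq D P') => [->|nP'].
      by rewrite add0r mulr1.
    by rewrite addr0 mulr0 lam0.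
  nra.
have dl' : is_distr lam'.
  split => //; have := lin (fun=> 1); under eq_bigr => D _ do rewrite mulr1.
  move=> ->; under eq_bigr => D _ do rewrite mulr1.
  rewrite lam1; lra.
have mix' : mix lam' = mix lam.
  apply/matrixP => i k; rewrite /mix !summxE.
  under eq_bigr => D _ do rewrite mxE.
  rewrite lin; under [RHS]eq_bigr => D _ do rewrite mxE.
  rewrite Hmx; lra.
have C' : C11 lam' < C11 lam.
  rewrite /C11 lin gtrDl pmulr_rlt0 // (rankm P PPs) (rankm P' P'Ps).
  have := @log2_lt R _ _ m2 rQ; have := @log2_le R _ _ (ltnW m2) rQ'.
  lra.
have : lowC11 (mix lam) <= C11 lam'.
  rewrite /lowC11; apply: ge_inf; last by exists lam'; rewrite ?mix'.
  exists 0 => x [mu [[mu0 _] _] <-]; rewrite /C11 sumr_ge0 // => D _.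
  by rewrite mulr_ge0 ?log2_ge0.
by rewrite -Cl => /(lt_le_trans C'); rewrite ltxx.
Qed.
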